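(* Let $a\neq0$, $b>0$, $d$ be integers with $d$ not a perfect square, $\alpha=a+b^2\sqrt d$, $N_\alpha=a^2-b^4d$ not a perfect square, $\varepsilon=(t+u\sqrt d)/2$ in the ring of integers of $\mathbb{Q}(\sqrt d)$ with $t,u$ nonzero integers, and let $x\ne0$, $y>0$ be integers with $x+y^2\sqrt d=\alpha\varepsilon^2$. Let $r_1=tb^2+au\pm2by$ (for either choice of sign) and $s_1'=-u\sqrt{N_\alpha/\operatorname{core}(N_\alpha)}$. Then $\gcd\big(4b^2r_1/\operatorname{core}(r_1),\,r_1^2\big)$ divides $s_1'^2$.
   Context: For a nonzero integer $n$, $\operatorname{core}(n)$ is the unique squarefree integer with $n/\operatorname{core}(n)$ a perfect square, $\operatorname{core}(1)=1$. Note $N_\alpha/\operatorname{core}(N_\alpha)$ is a positive perfect square, so $s_1'$ is an integer. *)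

(* Defs.v *)
From mathcomp Require Import all_boot all_order all_algebra all_field.
Set Implicit Arguments. Unset Strict Implicit. Unset Printing Implicit Defensive.
Import Order.TTheory GRing.Theory Num.Theory.

Definition core_nat (m : nat) : nat :=
  (\prod_(p <- primes m) p ^ (logn p m %% 2))%N.

(* core n for a nonzero integer n: the unique squarefree integer (same sign
   as n) with n / core n a perfect square; core 1 = 1.  (core 0 = 0 is a
   junk value, never used under the hypotheses of the statement.) *)
Definition core (n : int) : int := (sgz n * (core_nat `|n|%N)%:Z)%R.

Definition is_square (n : int) : Prop := exists k : int, n = (k ^+ 2)%R.

(* Main.v *)
Require Import Defs.
From mathcomp Require Import all_boot all_order all_algebra all_field.
From mathcomp Require Import ring lra zify.
Import Order.TTheory GRing.Theory Num.Theory.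
Local Open Scope ring_scope.


Lemma sqrt_not_int (d : int) : ~ is_square d -> sqrtC (d%:~R : algC) \notin Crat.
Proof.
move=> nsq; apply/negP=> hQ.
set s := sqrtC (d%:~R : algC).
have hs : s ^+ 2 = d%:~R by rewrite /s sqrtCK.
have hA : s \in Aint.
  apply: (@root_monic_Aint ('X^2 - (d%:~R)%:P)).
  - by rewrite /root !hornerE hs subrr.
  - exact: monicXnsubC.
  - apply/polyOverP => i; rewrite coefB coefXn coefC.
    by apply: rpredB; [case: (i == 2)%N | case: (i == 0)%N]; rewrite ?rpred_int ?rpred0 ?rpred1.
have /intrP[z hz] := Cint_rat_Aint hQ hA.
apply: nsq; exists z; apply/eqP; rewrite -(eqr_int algC) rmorphXn /=.
by move: hs; rewrite /s hz => ->.
Qed.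

Lemma alg_part (a b d t u x y : int) :
  ~ is_square d ->
  ((t%:~R + u%:~R * sqrtC d%:~R) / 2 : algC) \in Aint ->
  (x%:~R + (y ^+ 2)%:~R * sqrtC d%:~R : algC)
    = (a%:~R + (b ^+ 2)%:~R * sqrtC d%:~R)
      * ((t%:~R + u%:~R * sqrtC d%:~R) / 2) ^+ 2 ->
  4 * y ^+ 2 = 2 * a * t * u + b ^+ 2 * (t ^+ 2 + u ^+ 2 * d)
  /\ exists n : int, t ^+ 2 - u ^+ 2 * d = 4 * n.
Proof.
move=> nsq hA heq.
have hQ := @sqrt_not_int d nsq.

move: hA heq hQ; set s := sqrtC (d%:~R : algC) => hA heq hQ.
have hs : s ^+ 2 = d%:~R by rewrite /s sqrtCK.
split.
  set Q := 4 * y ^+ 2 - (2 * a * t * u + b ^+ 2 * (t ^+ 2 + u ^+ 2 * d)).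
  set P := 4 * x - (a * (t^+2 + u^+2 * d) + 2 * t * u * b^+2 * d).
  have E : P%:~R + Q%:~R * s = 0 :> algC.
    have E1 : P%:~R + Q%:~R * s = 4 * ((x%:~R + (y ^+ 2)%:~R * s) - (a%:~R + (b ^+ 2)%:~R * s)
      * ((t%:~R + u%:~R * s) / 2) ^+ 2) :> algC.
      rewrite /P /Q !(rmorphB, rmorphD, rmorphM, rmorphXn) /= -hs.
      by field; rewrite ?pnatr_eq0.
    by rewrite E1 heq subrr mulr0.
  apply/eqP; rewrite -subr_eq0 -/Q; apply/negP => /negP hQ0.
  move/negP: hQ; apply.
  have -> : s = - P%:~R / Q%:~R.
    have hq : (Q%:~R : algC) != 0 by rewrite intr_eq0.
    have hE : Q%:~R * s = - P%:~R by apply/eqP; rewrite -addr_eq0 addrC E.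
    by rewrite -(mulKf hq s) hE mulrC.
  by rewrite rpredM ?rpredN ?rpredV ?rpred_int.
have hw : (t%:~R * ((t%:~R + u%:~R * s) / 2) - ((t%:~R + u%:~R * s) / 2) ^+ 2 : algC)
    = (t ^+ 2 - u ^+ 2 * d)%:~R / 4.
  rewrite !(rmorphB, rmorphD, rmorphM, rmorphXn) /= -hs; by field; rewrite ?pnatr_eq0.
have hwA : ((t ^+ 2 - u ^+ 2 * d)%:~R / 4 : algC) \in Aint.
  rewrite -hw; apply: rpredB; first by apply: rpredM; [exact: Aint_int | exact: hA].
  by apply: rpredX.
have hwQ : ((t ^+ 2 - u ^+ 2 * d)%:~R / 4 : algC) \in Crat.
  by rewrite rpredM ?rpredV ?rpred_int // (_ : 4 = 4%:~R) ?rpred_int.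
have /intrP[n hn] := Cint_rat_Aint hwQ hwA.
exists n; apply/eqP; rewrite -(eqr_int algC).
have : (t ^+ 2 - u ^+ 2 * d)%:~R = (4 : algC) * n%:~R.
  by rewrite -hn mulrCA mulfV ?mulr1 // pnatr_eq0.
by move=> ->; rewrite rmorphM.
Qed.
Local Close Scope ring_scope.
Lemma dvd_by_logn (n m : nat) : (0 < n)%N -> (0 < m)%N ->
  (forall p, prime p -> logn p n <= logn p m)%N -> (n %| m)%N.
Proof.
move=> n0 m0 H; apply/dvdn_partP => // p; rewrite mem_primes => /andP[pp _].
by rewrite p_part pfactor_dvdn // H.
Qed.

Lemma prod_gt0 (s : seq nat) (f : nat -> nat) : all prime s -> (0 < \prod_(q <- s) q ^ f q)%N.
Proof.
elim: s => [|r s IH]; first by rewrite big_nil.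
by move=> /= /andP[pr ps]; rewrite big_cons muln_gt0 expn_gt0 prime_gt0 // IH.
Qed.

Lemma logn_prod_seq p (s : seq nat) (f : nat -> nat) : prime p -> uniq s -> all prime s ->
  logn p (\prod_(q <- s) q ^ f q) = if p \in s then f p else 0.
Proof.
move=> pp; elim: s => [|q s IH] /=; first by rewrite big_nil logn1.
move=> /andP[qs us] /andP[pq ps]; rewrite big_cons lognM ?prod_gt0 ?expn_gt0 ?prime_gt0 //.
rewrite lognX (@logn_prime p q pq) IH // in_cons.
  case: (eqVneq p q) => [-> | _] /=; last by rewrite muln0.
by rewrite (negPf qs) muln1 addn0.
Qed.

Lemma core_nat_gt0 n : (0 < core_nat n)%N.
Proof.
by rewrite /core_nat prod_gt0 // all_prime_primes.
Qed.

Lemma logn_core p n : prime p -> logn p (core_nat n) = (logn p n %% 2)%N.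
Proof.
move=> pp; rewrite /core_nat logn_prod_seq ?primes_uniq ?all_prime_primes //.
case: ifP => // /negbT; rewrite -logn_gt0 -leqNgt leqn0 => /eqP ->; by [].
Qed.

Lemma core_nat_dvd n : (0 < n)%N -> (core_nat n %| n)%N.
Proof.
move=> n0; apply: dvd_by_logn => //; first exact: core_nat_gt0.
by move=> p pp; rewrite logn_core // leq_mod.
Qed.
Local Open Scope ring_scope.
Definition vz (p : nat) (z : int) : nat := logn p `|z|%N.
Definition pk (p k : nat) : int := ((p ^ k)%N)%:Z.

Lemma vzM p (x y : int) : x != 0 -> y != 0 -> vz p (x * y) = (vz p x + vz p y)%N.
Proof. by move=> hx hy; rewrite /vz abszM lognM // absz_gt0. Qed.

Lemma vzX p (x : int) n : vz p (x ^+ n) = (n * vz p x)%N.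
Proof. by rewrite /vz abszX lognX. Qed.

Lemma dvd_vz p k z : prime p -> z != 0 -> (pk p k %| z)%Z = (k <= vz p z)%N.
Proof. by move=> pp hz; rewrite dvdzE /pk /= pfactor_dvdn // absz_gt0. Qed.

Lemma key p (b y t r1 r2 n : int) : prime p -> b != 0 -> y != 0 -> r1 != 0 -> r2 != 0 ->
  (r1 - r2 = 4 * b * y \/ r2 - r1 = 4 * b * y) ->
  4 * y ^+ 2 = t * (r1 + r2) - 4 * b ^+ 2 * n ->
  (vz p r2 < vz p r1)%N ->
  vz p r2 = (vz p 4 + vz p b + vz p y)%N /\ (vz p b <= vz p y)%N.
Proof.
move=> pp b0 y0 r10 r20 hd hy hlt.
have h40 : (4 : int) != 0 by [].
have hw0 : 4 * b * y != 0 by rewrite !mulf_neq0.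
have hw : vz p (4 * b * y) = (vz p 4 + vz p b + vz p y)%N by rewrite !vzM ?mulf_neq0.
have hdvd : forall j, (pk p j %| r1)%Z -> (pk p j %| r2)%Z -> (pk p j %| 4 * b * y)%Z.
  move=> j h1 h2; case: hd => <-; by rewrite rpredB.
have hdvd2 : forall j, (pk p j %| r1)%Z -> (pk p j %| 4 * b * y)%Z -> (pk p j %| r2)%Z.
  move=> j h1 h2; case: hd => hd.
    have -> : r2 = r1 - 4 * b * y by rewrite -hd; ring.
    by rewrite rpredB.
  have -> : r2 = r1 + 4 * b * y by rewrite -hd; ring.
  by rewrite rpredD.
have e1 : (vz p r2 <= vz p (4 * b * y))%N.
  rewrite -dvd_vz // hdvd // dvd_vz //; exact: ltnW.
have e2 : (vz p (4 * b * y) <= vz p r2)%N.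
  rewrite leqNgt; apply/negP => hgt.
  have : (pk p (vz p r2).+1 %| r2)%Z.
    by apply: hdvd2; rewrite dvd_vz.
  by rewrite dvd_vz // ltnn.
have he : vz p r2 = vz p (4 * b * y) by apply/eqP; rewrite eqn_leq e1 e2.
split; first by rewrite he hw.
rewrite leqNgt; apply/negP => hbg.
set K := (vz p 4 + 2 * vz p y).+1.
have hy0 : 4 * y ^+ 2 != 0 by rewrite mulf_neq0 // expf_neq0.
have hvy : vz p (4 * y ^+ 2) = (vz p 4 + 2 * vz p y)%N by rewrite vzM ?expf_neq0 // vzX.
have : (pk p K %| 4 * y ^+ 2)%Z.
  rewrite hy; apply: rpredB.
    apply: dvdz_mull; apply: rpredD; rewrite dvd_vz //.
      rewrite /K; apply: (leq_trans _ (ltnW hlt)); rewrite he hw; lia.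
    rewrite /K he hw; lia.
  apply: dvdz_mulr; rewrite dvd_vz ?mulf_neq0 ?expf_neq0 // vzM ?expf_neq0 // vzX /K; lia.
by rewrite dvd_vz // hvy /K ltnn.
Qed.

Lemma abs_core (z : int) : z != 0 -> `|core z|%N = core_nat `|z|%N.
Proof.
move=> z0; rewrite /core abszM.
have : (`|sgz z|%N : int) = 1 by rewrite abszE normr_sgz z0.
by case => ->; rewrite mul1n.
Qed.

Lemma core_dvdz (z : int) : z != 0 -> (core z %| z)%Z.
Proof. by move=> z0; rewrite dvdzE abs_core // core_nat_dvd // absz_gt0. Qed.

Local Close Scope ring_scope.
Lemma arith (G e e' vA vb vy v4 vu vk vN l2 : nat) :
 vA + e %% 2 = v4 + 2 * vb + e -> 2 * vk + vN %% 2 = vN -> e + e' = 2 * vu + vN -> v4 = 2 * l2 ->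
 (e' < e -> e' = v4 + vb + vy /\ vb <= vy) -> G <= vA -> G <= 2 * e -> G <= 2 * vu + 2 * vk.
Proof.
move=> LA LN LP L4 KY g1 g2.
have [hlt | hge] := ltnP e' e.
  have [E1 E2] := KY hlt.
  lia.
lia.
Qed.
Local Open Scope ring_scope.

Theorem lemma3p2 (a b d t u x y r1 k : int) :
  a != 0 -> 0 < b -> ~ is_square d ->
  ~ is_square (a ^+ 2 - b ^+ 4 * d) ->
  t != 0 -> u != 0 ->
  ((t%:~R + u%:~R * sqrtC d%:~R) / 2 : algC) \in Aint ->
  x != 0 -> 0 < y ->
  (x%:~R + (y ^+ 2)%:~R * sqrtC d%:~R : algC)
    = (a%:~R + (b ^+ 2)%:~R * sqrtC d%:~R)
      * ((t%:~R + u%:~R * sqrtC d%:~R) / 2) ^+ 2 ->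
  (r1 = t * b ^+ 2 + a * u + 2 * b * y \/ r1 = t * b ^+ 2 + a * u - 2 * b * y) ->
  r1 != 0 ->
  0 <= k -> k ^+ 2 = ((a ^+ 2 - b ^+ 4 * d) %/ core (a ^+ 2 - b ^+ 4 * d))%Z ->
  (gcdz ((4 * b ^+ 2 * r1) %/ core r1)%Z (r1 ^+ 2) %| (- u * k) ^+ 2)%Z.
Proof.
move=> a0 b0 nsqd nsqN t0 u0 hA x0 y0 heq hr1 r10 k0 hk.
have [H4 [n hn]] := @alg_part a b d t u x y nsqd hA heq.
have bn0 : b != 0 by rewrite gt_eqF.
have yn0 : y != 0 by rewrite gt_eqF.
have hprod : r1 * (2 * (t * b ^+ 2 + a * u) - r1) = u ^+ 2 * (a ^+ 2 - b ^+ 4 * d).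
  have -> : r1 * (2 * (t * b ^+ 2 + a * u) - r1)
      = (t * b ^+ 2 + a * u) ^+ 2 - b ^+ 2 * (4 * y ^+ 2).
    by case: hr1 => ->; ring.
  rewrite H4; ring.
move: hprod.
set N := a ^+ 2 - b ^+ 4 * d.
set r2 := 2 * (t * b ^+ 2 + a * u) - r1 => hprod.
have hdiff : r1 - r2 = 4 * b * y \/ r2 - r1 = 4 * b * y.
  by rewrite /r2; case: hr1 => ->; [left | right]; ring.
have hy4 : 4 * y ^+ 2 = t * (r1 + r2) - 4 * b ^+ 2 * n.
  have -> : 4 * b ^+ 2 * n = b ^+ 2 * (4 * n) by ring.
  by rewrite -hn H4 /r2; ring.
have N0 : N != 0.
  by apply/eqP => hN; apply: nsqN; exists 0; rewrite -/N hN expr0n.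
have r20 : r2 != 0.
  by apply/eqP => h; move: hprod; rewrite h mulr0 => /esym/eqP; rewrite mulf_eq0 expf_eq0 (negPf u0) (negPf N0).
have hkN : k ^+ 2 * core N = N by rewrite hk divzK // core_dvdz.
have kn0 : k != 0.
  by apply/eqP => hk0; move: hkN; rewrite hk0 expr0n mul0r => /esym/eqP; rewrite (negPf N0).
have hc1 : core r1 != 0.
  by apply/eqP => h; move: (@core_dvdz r1 r10); rewrite h dvd0z (negPf r10).
have hcN : core N != 0.
  by apply/eqP => h; move: (@core_dvdz N N0); rewrite h dvd0z (negPf N0).
set A := ((4 * b ^+ 2 * r1) %/ core r1)%Z.
have hAc : A * core r1 = 4 * b ^+ 2 * r1 by rewrite divzK // dvdz_mull // core_dvdz.
have A0 : A != 0.
  apply/eqP => h; move: hAc; rewrite h mul0r => /esym/eqP; rewrite !mulf_eq0 ?expf_eq0 (negPf bn0) (negPf r10) /=; by [].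
rewrite dvdzE /gcdz /=.
apply: dvd_by_logn.
- by rewrite gcdn_gt0 absz_gt0 A0.
- by rewrite absz_gt0 expf_neq0 // mulf_neq0 ?oppr_eq0.
move=> p pp.
have Ap : (0 < `|A|)%N by rewrite absz_gt0.
have g1 := dvdn_leq_log p Ap (dvdn_gcdl `|A|%N `|r1 ^+ 2|%N).
have g2 : (logn p (gcdn `|A| `|r1 ^+ 2|) <= logn p `|r1 ^+ 2|)%N.
  by apply: dvdn_leq_log; [rewrite absz_gt0 expf_neq0 | exact: dvdn_gcdr].
move: g1 g2; set G := logn p (gcdn _ _) => g1 g2.
have LA : (vz p A + vz p r1 %% 2 = vz p 4 + 2 * vz p b + vz p r1)%N.
  have := congr1 (vz p) hAc.
  rewrite vzM // (_ : vz p (core r1) = (vz p r1 %% 2)%N); last by rewrite /vz abs_core // logn_core.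
  move=> ->.
  by rewrite vzM ?mulf_neq0 ?expf_neq0 // vzM ?expf_neq0 // vzX.
have LR : logn p `|r1 ^+ 2|%N = (2 * vz p r1)%N by change (vz p (r1 ^+ 2) = (2 * vz p r1)%N); rewrite vzX.
have LN : (2 * vz p k + vz p N %% 2 = vz p N)%N.
  have := congr1 (vz p) hkN.
  by rewrite vzM ?expf_neq0 // vzX /vz abs_core // logn_core.
have LP : (vz p r1 + vz p r2 = 2 * vz p u + vz p N)%N.
  by have := congr1 (vz p) hprod; rewrite vzM // vzM ?expf_neq0 // vzX.
have LG : logn p `|(- u * k) ^+ 2|%N = (2 * vz p u + 2 * vz p k)%N.
  change (vz p ((- u * k) ^+ 2) = (2 * vz p u + 2 * vz p k)%N).
  by rewrite vzX vzM ?oppr_eq0 // {1}/vz abszN mulnDr.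
have L4 : vz p 4 = (2 * logn p 2)%N.
  by rewrite /vz (_ : `|4%R|%N = (2 ^ 2)%N) // lognX.
have KY := @key p b y t r1 r2 n pp bn0 yn0 r10 r20 hdiff hy4.
rewrite LG; rewrite LR in g2.
exact: (arith _ _ _ _ _ _ _ _ _ _ _ LA LN LP L4 KY g1 g2).
Qed.
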